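(* Let $Y$ be a real normed space, $K\subset Y$ a pointed closed convex cone, and $A,B,C\subset Y$ nonempty sets such that $C$ is $K$-bounded and $$A+C\subset\operatorname{cl}(C+B+K).$$ Then $A\subset\operatorname{cl}\operatorname{conv}(B+K)$.
   Context: A nonempty set $C\subset Y$ is $K$-bounded if there is a bounded set $M\subset Y$ with $C\subset M+K$. $\operatorname{cl}$ denotes norm closure and $\operatorname{conv}$ the convex hull. *)

(* Defs.v *)
From HB Require Import structures.
From mathcomp Require Import all_boot all_order all_algebra.
From mathcomp Require Import all_classical all_reals all_analysis.
Set Implicit Arguments. Unset Strict Implicit. Unset Printing Implicit Defensive.
Import Order.TTheory GRing.Theory Num.Theory.
Import numFieldNormedType.Exports.
Local Open Scope classical_set_scope.
Local Open Scope ring_scope.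

Section Defs.
Variables (R : realType) (Y : normedModType R).

Definition minkowski_sum (A B : set Y) : set Y :=
  [set z | exists a b, A a /\ B b /\ z = a + b].

Definition is_convex (S : set Y) : Prop :=
  forall x y (t : R), S x -> S y -> 0 <= t -> t <= 1 ->
    S (t *: x + (1 - t) *: y).

Definition conv_hull (S : set Y) : set Y :=
  [set x | forall T : set Y, is_convex T -> S `<=` T -> T x].

Definition is_cone (K : set Y) : Prop :=
  K 0 /\ forall (t : R) k, 0 <= t -> K k -> K (t *: k).

Definition is_pointed (K : set Y) : Prop :=
  forall k, K k -> K (- k) -> k = 0.

Definition pointed_closed_convex_cone (K : set Y) : Prop :=
  [/\ is_cone K, is_convex K, closed K & is_pointed K].

Definition K_bounded (K C : set Y) : Prop :=
  C !=set0 /\ exists M : set Y, bounded_set M /\ C `<=` minkowski_sum M K.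

End Defs.

(* Main.v *)
Require Import Defs.
From HB Require Import structures.
From mathcomp Require Import all_boot all_order all_algebra.
From mathcomp Require Import all_classical all_reals all_analysis.
Import Order.TTheory GRing.Theory Num.Theory.
Import numFieldNormedType.Exports.
Local Open Scope classical_set_scope.
Local Open Scope ring_scope.

Lemma shuffle (V:zmodType) (X a c0 cn P b k c1 : V) : X + a + c0 - cn - (P + (b+k)) = a + c0 - (c1+b+k) + (X + c1 - cn - P).
Proof.
rewrite !opprD !addrA.
rewrite !(addrAC _ (- c1)).
rewrite (addrAC _ c1 (- cn)) (addrAC _ c1 (-P)) addrK.
rewrite !(addrAC _ _ X) (addrC a X).
by rewrite !(addrAC _ (- b)) !(addrAC _ (-k)).
Qed.

Lemma shuffle2 (V:zmodType) (X P k c0 m : V) : X - (P + k) = X + c0 - (m + k) - P + (m - c0).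
Proof.
rewrite !opprD !addrA.
do 4! rewrite (addrAC _ c0). rewrite addrK.
do 2! rewrite (addrAC _ (-m)). rewrite subrK.
by rewrite addrAC.
Qed.

Section H.
Variables (R : realType) (Y : normedModType R).

Lemma hull_convex (S : set Y) : is_convex (conv_hull S).
Proof.
move=> x y t Hx Hy t0 t1 T cT ST; apply: (cT x y t) => //; [exact: Hx|exact: Hy].
Qed.

Lemma hull_sub (S : set Y) : S `<=` conv_hull S.
Proof. by move=> x Sx T _ ST; apply: ST. Qed.

Lemma cone_add (K : set Y) x y : is_cone K -> is_convex K -> K x -> K y -> K (x + y).
Proof.
move=> [K0 Ks] cK Kx Ky.
have -> : x + y = 2 *: (2^-1 *: x + (1 - 2^-1) *: y).
  have h : (1 - 2^-1 : R) = 2^-1 by rewrite {1}(splitr 1) mul1r addrK.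
  by rewrite h scalerDr !scalerA mulfV ?pnatr_eq0 // !scale1r.
apply: Ks => //; apply: cK => //; rewrite ?invr_ge0 ?ler0n // invf_le1 ?ler1n //.
Qed.

Lemma hull_addK (K B : set Y) x k : is_cone K -> is_convex K ->
  conv_hull (minkowski_sum B K) x -> K k -> conv_hull (minkowski_sum B K) (x + k).
Proof.
move=> coK cK Hx Kk.
pose S := [set z | forall k, K k -> conv_hull (minkowski_sum B K) (z + k)].
suff : S x by apply.
apply: Hx.
- move=> u v t Su Sv t0 t1 k' Kk'.
  have -> : t *: u + (1 - t) *: v + k' = t *: (u + k') + (1 - t) *: (v + k').
    by rewrite !scalerDr addrACA -scalerDl [t + _]addrC subrK scale1r.
  by apply: hull_convex => //; [apply: Su|apply: Sv].
- move=> z [b [k0 [Bb [Kk0 ->]]]] k' Kk'.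
  apply: hull_sub; exists b, (k0 + k'); split => //; split; first exact: cone_add.
  by rewrite addrA.
Qed.


Lemma iter_lemma (K B C : set Y) (a : Y) (eps : R) b0 :
  is_cone K -> is_convex K -> B b0 ->
  (forall c, C c -> exists c' b k, [/\ C c', B b, K k &
      `|a + c - (c' + b + k)| < eps]) ->
  forall n c0, C c0 -> exists cn p, [/\ C cn, conv_hull (minkowski_sum B K) p &
     `|n%:R *: a + c0 - cn - n%:R *: p| <= n%:R * eps].
Proof.
move=> coK cK Bb0 step n; elim: n => [|n IH] c0 Cc0.
  exists c0, (b0 + 0); split => //.
    by apply: hull_sub; exists b0, 0; split => //; split => //; case: coK.
  by rewrite !scale0r add0r subrr subr0 normr0 mul0r.
have [c1 [b [k [Cc1 Bb Kk Hs]]]] := step c0 Cc0.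
have [cn [p [Ccn Hp Hn]]] := IH c1 Cc1.
have n1 : (n.+1%:R : R) != 0 by rewrite pnatr_eq0.
pose t : R := n%:R / n.+1%:R.
exists cn, (t *: p + (1 - t) *: (b + k)); split => //.
  apply: hull_convex => //; first by apply: hull_sub; exists b, k.
  - by rewrite /t divr_ge0 ?ler0n.
  - by rewrite /t ler_pdivrMr ?ltr0n // mul1r ler_nat.
have -> : n.+1%:R *: (t *: p + (1 - t) *: (b + k)) = n%:R *: p + (b + k).
  rewrite scalerDr !scalerA /t mulrBr mulr1 mulrCA mulfV // mulr1.
  by rewrite -natrB // subSnn scale1r.
have -> : n.+1%:R *: a + c0 - cn - (n%:R *: p + (b + k)) =
   (a + c0 - (c1 + b + k)) + (n%:R *: a + c1 - cn - n%:R *: p).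
  by rewrite -natr1 scalerDl scale1r (shuffle _ _ _ _ _ _ _ _ c1).
rewrite -natr1 mulrDl mul1r addrC.
by apply: (le_trans (ler_normD _ _)); rewrite lerD // ltW.
Qed.

End H.

Theorem mainTheorem3 (R : realType) (Y : normedModType R) (K A B C : set Y) :
  pointed_closed_convex_cone K ->
  A !=set0 -> B !=set0 -> C !=set0 ->
  K_bounded K C ->
  minkowski_sum A C `<=` closure (minkowski_sum (minkowski_sum C B) K) ->
  A `<=` closure (conv_hull (minkowski_sum B K)).
Proof.
move=> [coK cK _ _] _ [b0 Bb0] [c0 Cc0] [_ [M [Mb CM]]] Hsub a Aa.
have [r r0 Hr] := pinfty_ex_gt0 Mb.
move=> N /nbhs_ballP [e /= e0 He].
have e20 : 0 < e / 2 by rewrite divr_gt0.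
have step : forall c, C c -> exists c' b k, [/\ C c', B b, K k &
      `|a + c - (c' + b + k)| < e / 2].
  move=> c Cc.
  have := Hsub (a + c) (ex_intro _ a (ex_intro _ c (conj Aa (conj Cc erefl)))).
  move=> /(_ _ (nbhsx_ballx _ _ e20)) [z [[cb [k [[c' [b [Cc' [Bb ->]]]] [Kk ->]]]] Hz]].
  exists c', b, k; split => //.
  by move: Hz; rewrite -ball_normE.
pose x := (r + `|c0|) / (e / 2).
pose n := (Num.truncn x).+1.
have [cn [p [Ccn Hp Hn]]] := @iter_lemma R Y K B C a (e/2) b0 coK cK Bb0 step n c0 Cc0.
have [m [k' [Mm [Kk' Ecn]]]] := CM _ Ccn.
have n0 : (0 : R) < n%:R by rewrite ltr0n.
have Kk'n : K (n%:R^-1 *: k') by case: coK => _ Ks; apply: Ks; rewrite ?invr_ge0 ?ltW.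
exists (p + n%:R^-1 *: k'); split; first by apply: hull_addK.
apply: He; rewrite -ball_normE /ball_ /=.
have E : n%:R *: (a - (p + n%:R^-1 *: k')) =
    (n%:R *: a + c0 - cn - n%:R *: p) + (m - c0).
  rewrite Ecn scalerBr scalerDr scalerA mulfV ?gt_eqF // scale1r.
  by rewrite (shuffle2 _ _ _ _ c0 m).
rewrite -(ltr_pM2l n0).
rewrite -[X in X * _](ger0_norm (ltW n0)) -normrZ E.
apply: (le_lt_trans (ler_normD _ _)).
have Hm : `|m - c0| <= r + `|c0| by apply: (le_trans (ler_normB _ _)); rewrite lerD2r; apply: Hr.
have Hx : r + `|c0| < n%:R * (e / 2).
  have h := truncnS_gt x; rewrite /x in h.
  by move: h; rewrite ltr_pdivrMr.
have -> : n%:R * e = n%:R * (e / 2) + n%:R * (e / 2).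
  by rewrite -mulrDr -splitr.
by apply: (le_lt_trans (lerD Hn Hm)); rewrite ltrD2l.
Qed.
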